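(* Let $k \geq 2$ be an integer. For integers $d, i, u$ with $1 \le d \le k$ and $0 \le u \le k$, let $$D(d,i,u) = \frac{\binom{u}{i}\binom{k-u}{d-i}}{\binom{k}{d}},$$ with the convention that a binomial coefficient $\binom{n}{m}$ is $0$ when $m<0$ or $m>n$. Then for all integers $d$ with $1 \le d \le k-1$ and all $u$ with $0 \le u \le k$ and $u \le \frac{k+1}{d+1}$, we have $$D(d+1,i,u) \ge D(d,i,u) \quad \text{for every integer } i > 0 .$$ In words, the utility degree distribution of degree $d+1$ dominates that of degree $d$ on all nonzero utility degrees.
   Context: Setting: LT codes with $k$ input symbols. An output symbol of degree $d$ is the XOR of $d$ distinct input symbols (its neighbors) chosen uniformly at random. At some moment of decoding, $u$ input symbols are still unsolved. The utility degree of a received output symbol is the number of its neighbors that are still unsolved. Thus $D(d,i,u)$ is the probability that an output symbol of degree $d$ has utility degree $i$ when $u$ input symbols are unsolved (a hypergeometric distribution, nonzero only for $\max(0,d-k+u) \le i \le \min(d,u)$). *)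

(* Defs.v *)
From mathcomp Require Import all_boot all_order all_algebra.
Set Implicit Arguments. Unset Strict Implicit. Unset Printing Implicit Defensive.
Import Order.TTheory GRing.Theory Num.Theory.
Local Open Scope ring_scope.

Definition binz (n m : int) : nat :=
  match n, m with
  | Posz n', Posz m' => 'C(n', m')
  | _, _ => 0%N
  end.

Definition Dutil (R : fieldType) (k : nat) (d i u : int) : R :=
  (binz u i)%:R * (binz (k%:Z - u) (d - i))%:R / (binz k%:Z d)%:R.

(* Main.v *)
Require Import Defs.
From mathcomp Require Import all_boot all_order all_algebra.
From mathcomp Require Import zify ring.
Import Order.TTheory GRing.Theory Num.Theory.
Local Open Scope ring_scope.

Lemma key_nat (k d u i : nat) :
  (1 <= i)%N -> (i <= d)%N -> (d < k)%N -> (u <= k)%N ->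
  (u * d.+1 <= k.+1)%N -> (d - i <= k - u)%N ->
  ((d - i).+1 * (k - d) <= d.+1 * (k - u - (d - i)))%N.
Proof. move=> *; nia. Qed.

Lemma key_bin (k d u i : nat) :
  (1 <= i)%N -> (d < k)%N -> (u <= k)%N -> (u * d.+1 <= k.+1)%N ->
  (i <= d)%N ->
  ('C(k - u, d - i) * 'C(k, d.+1) <= 'C(k - u, (d - i).+1) * 'C(k, d))%N.
Proof.
move=> i1 dk uk ud id.
set m := (k - u)%N; set j := (d - i)%N.
have hpos : (0 < d.+1 * j.+1)%N by rewrite muln_gt0.
rewrite -(leq_pmul2l hpos).
have L1 := mul_bin_left k d.
have L2 := mul_bin_left m j.
have E1 : (d.+1 * j.+1 * ('C(m, j) * 'C(k, d.+1)) =
          (j.+1 * (k - d)) * ('C(m, j) * 'C(k, d)))%N.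
  transitivity (j.+1 * 'C(m, j) * (d.+1 * 'C(k, d.+1)))%N; first by ring.
  rewrite L1; ring.
have E2 : (d.+1 * j.+1 * ('C(m, j.+1) * 'C(k, d)) =
          (d.+1 * (m - j)) * ('C(m, j) * 'C(k, d)))%N.
  transitivity (d.+1 * 'C(k, d) * (j.+1 * 'C(m, j.+1)))%N; first by ring.
  rewrite L2; ring.
rewrite E1 E2.
case: (leqP j m) => jm.
  apply: leq_mul => //; exact: key_nat.
by rewrite bin_small // !mul0n muln0.
Qed.

Theorem mainTheorem1 (R : realFieldType) (k : nat) (d u : int) :
  (2 <= k)%N ->
  1 <= d -> d <= k%:Z - 1 ->
  0 <= u -> u <= k%:Z ->
  (u%:~R : R) <= (k%:R + 1) / (d%:~R + 1) ->
  forall i : int, 0 < i ->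
    Dutil R k d i u <= Dutil R k (d + 1) i u.
Proof.
case: d => [d|d] //; case: u => [u|u] // k2 d1 dk _ uk hu [i|i] // i0.
have d1' : (1 <= d)%N by [].
have dk' : (d < k)%N by lia.
have uk' : (u <= k)%N by [].
have i1 : (1 <= i)%N by [].
have ud : (u * d.+1 <= k.+1)%N.
  move: hu; rewrite ler_pdivlMr; last by rewrite ltr_pwDr // ler0z.
  by rewrite !pmulrn !natr1 -natrM ler_nat.
rewrite /Dutil.
have ckd : 0 < ('C(k, d))%:R :> R by rewrite ltr0n bin_gt0 ltnW.
have ckd1 : 0 < ('C(k, d.+1))%:R :> R by rewrite ltr0n bin_gt0.
have e3 : k%:Z - Posz u = Posz (k - u) by lia.
have e4 : Posz d + 1 = Posz d.+1 by lia.
rewrite e3 e4.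
case: (leqP i d) => id.
  have e1 : Posz d - Posz i = Posz (d - i) by lia.
  have e2 : Posz d.+1 - Posz i = Posz (d - i).+1 by lia.
  rewrite e1 e2 /=.
  rewrite ler_pdivrMr // mulrAC ler_pdivlMr // -!natrM ler_nat.
  by rewrite -!mulnA leq_mul2l key_bin ?orbT.
have e1 : Posz d - Posz i = Negz (i - d).-1.
  rewrite NegzE prednK ?subn_gt0 //; lia.
rewrite e1 /binz /= mulr0 mul0r.
by rewrite divr_ge0 ?mulr_ge0 ?ler0n.
Qed.
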